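(* Let $H\in\mathbb{R}^{n\times n}$ and $M\in\mathbb{R}^{m\times m}$ be symmetric positive semidefinite and $A\in\mathbb{R}^{m\times n}$. Let $l\neq k$ be indices and $\mathcal{B}\subseteq\{1,\dots,n\}\setminus\{l,k\}$. Assume that the linear system in the unknowns $(\Delta x_l,\Delta x_k,\Delta x_{\mathcal{B}},\Delta y,\Delta z_l,\Delta z_k)$ \[ \begin{aligned} h_{ll}\Delta x_l+h_{kl}\Delta x_k+h_{\mathcal{B}l}^T\Delta x_{\mathcal{B}}-a_l^T\Delta y-\Delta z_l&=0,\\ h_{kl}\Delta x_l+h_{kk}\Delta x_k+h_{\mathcal{B}k}^T\Delta x_{\mathcal{B}}-a_k^T\Delta y-\Delta z_k&=0,\\ h_{\mathcal{B}l}\Delta x_l+h_{\mathcal{B}k}\Delta x_k+H_{\mathcal{B}\mathcal{B}}\Delta x_{\mathcal{B}}-A_{\mathcal{B}}^T\Delta y&=0,\\ a_l\Delta x_l+a_k\Delta x_k+A_{\mathcal{B}}\Delta x_{\mathcal{B}}+M\Delta y&=0,\\ \Delta x_l+\Delta z_l&=1,\\ \Delta x_k&=0 \end{aligned} \] has a unique solution, and that in it $\Delta z_k\neq 0$. Then the matrices \[ K_l=\begin{pmatrix}h_{ll}&h_{\mathcal{B}l}^T&a_l^T\\ h_{\mathcal{B}l}&H_{\mathcal{B}\mathcal{B}}&A_{\mathcal{B}}^T\\ a_l&A_{\mathcal{B}}&-M\end{pmatrix}\quad\text{and}\quad K_k=\begin{pmatrix}h_{kk}&h_{\mathcal{B}k}^T&a_k^T\\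 h_{\mathcal{B}k}&H_{\mathcal{B}\mathcal{B}}&A_{\mathcal{B}}^T\\ a_k&A_{\mathcal{B}}&-M\end{pmatrix} \] are nonsingular.
   Context: $h_{ij}$ denotes the $(i,j)$ entry of $H$; $h_{\mathcal{B}j}$ the column vector $(h_{ij})_{i\in\mathcal{B}}$; $H_{\mathcal{B}\mathcal{B}}$ the principal submatrix of $H$ with rows and columns in $\mathcal{B}$; $a_j$ the $j$th column of $A$; $A_{\mathcal{B}}$ the matrix of columns of $A$ indexed by $\mathcal{B}$. *)

(* Defs.v *)
From HB Require Import structures.
From mathcomp Require Import all_boot all_order all_algebra.
Set Implicit Arguments. Unset Strict Implicit. Unset Printing Implicit Defensive.
Import Order.TTheory GRing.Theory Num.Theory.
Local Open Scope ring_scope.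

Section Defs.
Variable R : realFieldType.

Definition psd (n : nat) (H : 'M[R]_n) : Prop :=
  H^T = H /\ forall x : 'cV[R]_n, 0 <= (x^T *m H *m x) 0 0.

(* index set B; its elements are enumerated (increasingly) by enum_val *)
Definition subB n (B : {set 'I_n}) (i : 'I_#|B|) : 'I_n := enum_val i.

Definition HBB n (H : 'M[R]_n) (B : {set 'I_n}) : 'M[R]_#|B| :=
  \matrix_(i, j) H (subB i) (subB j).
Definition hBcol n (H : 'M[R]_n) (B : {set 'I_n}) (j : 'I_n) : 'cV[R]_#|B| :=
  \col_i H (subB i) j.
Definition AB m n (A : 'M[R]_(m, n)) (B : {set 'I_n}) : 'M[R]_(m, #|B|) :=
  \matrix_(i, j) A i (subB j).
Definition acol m n (A : 'M[R]_(m, n)) (j : 'I_n) : 'cV[R]_m := col j A.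

Definition Kmat m n (H : 'M[R]_n) (A : 'M[R]_(m, n)) (M : 'M[R]_m)
    (B : {set 'I_n}) (j : 'I_n) : 'M[R]_(1 + (#|B| + m)) :=
  block_mx (H j j)%:M (row_mx (hBcol H B j)^T (acol A j)^T)
           (col_mx (hBcol H B j) (acol A j))
           (block_mx (HBB H B) (AB A B)^T (AB A B) (- M)).

Definition lin_system m n (H : 'M[R]_n) (A : 'M[R]_(m, n)) (M : 'M[R]_m)
    (l k : 'I_n) (B : {set 'I_n})
    (dxl dxk : R) (dxB : 'cV[R]_#|B|) (dy : 'cV[R]_m) (dzl dzk : R) : Prop :=
  (H l l * dxl + H k l * dxk + ((hBcol H B l)^T *m dxB) 0 0
        - ((acol A l)^T *m dy) 0 0 - dzl = 0) /\ (
      H k l * dxl + H k k * dxk + ((hBcol H B k)^T *m dxB) 0 0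
        - ((acol A k)^T *m dy) 0 0 - dzk = 0) /\ (
      dxl *: hBcol H B l + dxk *: hBcol H B k + HBB H B *m dxB
        - (AB A B)^T *m dy = 0) /\ (
      dxl *: acol A l + dxk *: acol A k + AB A B *m dxB + M *m dy = 0) /\ (
      dxl + dzl = 1) /\ dxk = 0.

End Defs.

Arguments lin_system [R m n] H A M l k B dxl dxk dxB dy dzl dzk.

(* Main.v *)
Require Import Defs.
From HB Require Import structures.
From mathcomp Require Import all_boot all_order all_algebra.
From mathcomp Require Import ring lra.
Import Order.TTheory GRing.Theory Num.Theory.
Local Open Scope ring_scope.

Lemma addE (R : realFieldType) p q (P Q : 'M[R]_(p,q)) i j : (P + Q) i j = P i j + Q i j.
Proof. by rewrite mxE. Qed.
Lemma oppE (R : realFieldType) p q (P : 'M[R]_(p,q)) i j : (- P) i j = - P i j.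
Proof. by rewrite mxE. Qed.
Lemma scaleE (R : realFieldType) p q (c : R) (P : 'M[R]_(p,q)) i j : (c *: P) i j = c * P i j.
Proof. by rewrite mxE. Qed.
Lemma zeroE (R : realFieldType) p q i j : (0 : 'M[R]_(p,q)) i j = 0.
Proof. by rewrite mxE. Qed.
Lemma scalE (R : realFieldType) (c : R) : (c%:M : 'M[R]_1) 0 0 = c.
Proof. by rewrite mxE eqxx mulr1n. Qed.

Definition Emx (R : realFieldType) {n} (B : {set 'I_n}) : 'M[R]_(#|B|, n) :=
  rowsub (fun i : 'I_#|B| => subB i) 1%:M.

Lemma I1 (R : realFieldType) n (H : 'M[R]_n) j q :
  (delta_mx j 0 : 'cV[R]_n)^T *m (H *m delta_mx q 0) = (H j q)%:M.
Proof. by rewrite trmx_delta -colE -rowE; apply/matrixP => a b; rewrite !ord1 !mxE eqxx mulr1n. Qed.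

Lemma I2 (R : realFieldType) n (H : 'M[R]_n) B q :
  Emx R B *m (H *m delta_mx q 0) = hBcol H B q.
Proof. by rewrite /Emx mul_rowsub_mx mul1mx -colE; apply/matrixP => a b; rewrite !ord1 !mxE. Qed.

Lemma ET (R : realFieldType) n (B : {set 'I_n}) :
  (Emx R B)^T = colsub (fun i : 'I_#|B| => subB i) 1%:M.
Proof. by apply/matrixP => a b; rewrite !mxE eq_sym. Qed.

Lemma I5 (R : realFieldType) n (H : 'M[R]_n) B :
  Emx R B *m (H *m (Emx R B)^T) = HBB H B.
Proof. by rewrite ET mulmx_colsub mulmx1 /Emx mul_rowsub_mx mul1mx; apply/matrixP => a b; rewrite !mxE. Qed.

Lemma I6 (R : realFieldType) m n (A : 'M[R]_(m,n)) B :
  A *m (Emx R B)^T = AB A B.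
Proof. by rewrite ET mulmx_colsub mulmx1; apply/matrixP => a b; rewrite !mxE. Qed.

Lemma trE (R : realFieldType) p q (P : 'M[R]_(p,q)) i j : P^T i j = P j i.
Proof. by rewrite mxE. Qed.


Lemma tr11 (R : realFieldType) (P : 'M[R]_1) : P^T 0 0 = P 0 0.
Proof. by rewrite mxE. Qed.

Lemma psd_null (R : realFieldType) n (H : 'M[R]_n) (x : 'cV[R]_n) :
  psd H -> (x^T *m H *m x) 0 0 = 0 -> H *m x = 0.
Proof.
move=> [HT Hpos] hx.
set y := H *m x.
set s := (y^T *m H *m x) 0 0.
set c := (y^T *m H *m y) 0 0.
have sy : s = (y^T *m y) 0 0 by rewrite /s -mulmxA.
have bxy : (x^T *m H *m y) 0 0 = s.
  have -> : x^T *m H *m y = (y^T *m H *m x)^T.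
    by rewrite !trmx_mul !trmxK HT !mulmxA.
  exact: tr11.
have quad : forall t : R, 0 <= 2 * t * s + t ^+ 2 * c.
  move=> t; have := Hpos (x + t *: y).
  rewrite !linearD !linearZ /= !mulmxDl.
  rewrite -!scalemxAl !(addE, scaleE) hx bxy -/s -/c => h; lra.
have c0 : 0 <= c by rewrite /c; have := Hpos y; rewrite /=.
have s0 : s = 0.
  set t := - s / (c + 1).
  have ht : t * (c + 1) = - s by rewrite /t mulrVK // unitfE; apply: lt0r_neq0; lra.
  have := quad t.
  nra.
have : forall i, y i 0 * y i 0 = 0.
  move=> i; apply: (psumr_eq0P (P := predT) (F := fun i => y i 0 * y i 0)) => //.
    by move=> j _; rewrite -expr2 sqr_ge0.
  by apply: (etrans _ s0); rewrite sy mxE; apply: eq_bigr => j _; rewrite trE.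
move=> h; apply/matrixP => i j; rewrite ord1 zeroE.
by have /eqP := h i; rewrite mulf_eq0 orbb => /eqP.
Qed.


Definition lg {R : realFieldType} {m n} (H : 'M[R]_n) (A : 'M[R]_(m, n)) (M : 'M[R]_m)
    (l k : 'I_n) (B : {set 'I_n}) (r : R)
    (dxl dxk : R) (dxB : 'cV[R]_#|B|) (dy : 'cV[R]_m) (dzl dzk : R) : Prop :=
  (H l l * dxl + H k l * dxk + ((hBcol H B l)^T *m dxB) 0 0
        - ((acol A l)^T *m dy) 0 0 - dzl = 0) /\ (
      H k l * dxl + H k k * dxk + ((hBcol H B k)^T *m dxB) 0 0
        - ((acol A k)^T *m dy) 0 0 - dzk = 0) /\ (
      dxl *: hBcol H B l + dxk *: hBcol H B k + HBB H B *m dxB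
        - (AB A B)^T *m dy = 0) /\ (
      dxl *: acol A l + dxk *: acol A k + AB A B *m dxB + M *m dy = 0) /\ (
      dxl + dzl = r) /\ dxk = 0.

Lemma lg_lin (R : realFieldType) m n (H : 'M[R]_n) (A : 'M[R]_(m, n)) (M : 'M[R]_m)
    (l k : 'I_n) (B : {set 'I_n}) dxl dxk dxB dy dzl dzk :
  lin_system H A M l k B dxl dxk dxB dy dzl dzk <-> lg H A M l k B 1 dxl dxk dxB dy dzl dzk.
Proof. by []. Qed.

Lemma lg_comb (R : realFieldType) m n (H : 'M[R]_n) (A : 'M[R]_(m, n)) (M : 'M[R]_m)
    (l k : 'I_n) (B : {set 'I_n}) (c r r' : R)
    x1 x2 xB y z1 z2 x1' x2' xB' y' z1' z2' :
  lg H A M l k B r x1 x2 xB y z1 z2 ->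
  lg H A M l k B r' x1' x2' xB' y' z1' z2' ->
  lg H A M l k B (c * r + r') (c * x1 + x1') (c * x2 + x2') (c *: xB + xB')
     (c *: y + y') (c * z1 + z1') (c * z2 + z2').
Proof.
move=> [e1 [e2 [e3 [e4 [e5 e6]]]]] [f1 [f2 [f3 [f4 [f5 f6]]]]].
split; [|split; [|split; [|split; [|split]]]].
- apply: (@etrans _ _ (c * 0 + 0)); last by rewrite mulr0 addr0.
  rewrite -[X in _ = c * X + _]e1 -[X in _ = _ + X]f1.
  rewrite !mulmxDr -!scalemxAr !(addE, scaleE). ring.
- apply: (@etrans _ _ (c * 0 + 0)); last by rewrite mulr0 addr0.
  rewrite -[X in _ = c * X + _]e2 -[X in _ = _ + X]f2.
  rewrite !mulmxDr -!scalemxAr !(addE, scaleE). ring.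
- apply: (@etrans _ _ (c *: 0 + 0)); last by rewrite scaler0 addr0.
  rewrite -[X in _ = c *: X + _]e3 -[X in _ = _ + X]f3.
  apply/matrixP => i j.
  rewrite !mulmxDr -!scalemxAr !(addE, scaleE, oppE). ring.
- apply: (@etrans _ _ (c *: 0 + 0)); last by rewrite scaler0 addr0.
  rewrite -[X in _ = c *: X + _]e4 -[X in _ = _ + X]f4.
  apply/matrixP => i j.
  rewrite !mulmxDr -!scalemxAr !(addE, scaleE, oppE). ring.
- by rewrite -e5 -f5; ring.
- by rewrite e6 f6 mulr0 addr0.
Qed.


Lemma I4 (R : realFieldType) n (H : 'M[R]_n) (B : {set 'I_n}) j :
  H^T = H -> (delta_mx j 0 : 'cV[R]_n)^T *m (H *m (Emx R B)^T) = (hBcol H B j)^T.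
Proof. by move=> HT; rewrite -I2 !trmx_mul HT !mulmxA. Qed.

Lemma kernel_facts (R : realFieldType) m n (H : 'M[R]_n) (A : 'M[R]_(m, n)) (M : 'M[R]_m)
    (B : {set 'I_n}) (j : 'I_n) (al : R) (u : 'rV[R]_#|B|) (w : 'rV[R]_m) :
  psd H -> psd M ->
  row_mx al%:M (row_mx u w) *m Kmat H A M B j = 0 ->
  [/\ w *m M = 0, w *m acol A j = 0, w *m AB A B = 0 &
   [/\ forall q, al * H j q + (u *m hBcol H B q) 0 0 = 0,
      al *: (hBcol H B j)^T + u *m HBB H B = 0 &
      al *: (acol A j)^T + u *m (AB A B)^T = 0]].
Proof.
move=> psdH psdM hv.
have [HT _] := psdH; have [MT _] := psdM.
move: hv; rewrite /Kmat mul_row_block mul_mx_row mul_row_col mul_row_block.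
rewrite add_row_mx -row_mx0 => /eq_row_mx [E1]; rewrite -row_mx0 => /eq_row_mx [E2 E3].
rewrite mul_scalar_mx in E1; rewrite mul_scalar_mx in E2; rewrite mul_scalar_mx in E3.
set X := al *: (delta_mx j 0 : 'cV[R]_n)^T + u *m Emx R B.
set Z := X *m H + w *m A.
have Zej : Z *m (delta_mx j 0 : 'cV[R]_n) = 0.
  rewrite /Z /X !mulmxDl -!mulmxA -scalemxAl I1 I2 -colE.
  by rewrite -E1 addrA.
have ZE : Z *m (Emx R B)^T = 0.
  rewrite /Z /X !mulmxDl -!mulmxA -scalemxAl I4 // I5 I6.
  by rewrite -E2 addrA.
have XA' : X *m A^T = al *: (acol A j)^T + u *m (AB A B)^T.
  rewrite /X mulmxDl -mulmxA -scalemxAl -trmx_mul -colE -I6 trmx_mul trmxK.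
  by rewrite mulmxA.
have XA : X *m A^T = w *m M.
  rewrite XA'; apply/eqP; rewrite -subr_eq0 -addrA.
  by rewrite mulmxN in E3; rewrite E3.
have XZ : X *m Z^T = 0.
  have h1 : (delta_mx j 0 : 'cV[R]_n)^T *m Z^T = 0 by rewrite -trmx_mul Zej linear0.
  have h2 : Emx R B *m Z^T = 0 by rewrite -[Emx R B]trmxK -trmx_mul ZE linear0.
  by rewrite {1}/X mulmxDl -!mulmxA -scalemxAl h1 h2 scaler0 mulmx0 addr0.
have QQ : X *m H *m X^T + w *m M *m w^T = 0.
  by apply: (etrans _ XZ); rewrite /Z [(X *m H + _)^T]linearD /= !trmx_mul mulmxDr HT !mulmxA XA.
have q1 : 0 <= (X *m H *m X^T) 0 0 by have := psdH.2 X^T; rewrite trmxK.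
have q2 : 0 <= (w *m M *m w^T) 0 0 by have := psdM.2 w^T; rewrite trmxK.
have QQ0 := congr1 (fun P : 'M[R]_1 => P 0 0) QQ; rewrite /= addE zeroE in QQ0.
have e1 : (X *m H *m X^T) 0 0 = 0 by lra.
have e2 : (w *m M *m w^T) 0 0 = 0 by lra.
have HX : H *m X^T = 0 by apply: psd_null => //; rewrite trmxK.
have MW : M *m w^T = 0 by apply: psd_null => //; rewrite trmxK.
have XH : X *m H = 0 by rewrite -(trmxK (X *m H)) trmx_mul HT HX linear0.
have Mw : w *m M = 0 by rewrite -(trmxK (w *m M)) trmx_mul MT MW linear0.
have ZwA : Z = w *m A by rewrite /Z XH add0r.
split => //.
- by rewrite /acol colE mulmxA -ZwA Zej.
- by rewrite -I6 mulmxA -ZwA ZE.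
split.
- move=> q; have := congr1 (fun P : 'rV[R]_n => (P *m (delta_mx q 0 : 'cV[R]_n)) 0 0) XH.
  by rewrite /X /= !mulmxDl -!mulmxA -scalemxAl I1 I2 mul0mx addE scaleE scalE zeroE.
- have := congr1 (fun P => P *m (Emx R B)^T) XH.
  by rewrite /X /= !mulmxDl -!mulmxA -scalemxAl I4 // I5 mul0mx.
- by rewrite -XA' XA Mw.
Qed.


Lemma mulTT (R : realFieldType) p (P : 'M[R]_(p, 1)) (Q : 'M[R]_(1, p)) :
  (P^T *m Q^T) 0 0 = (Q *m P) 0 0.
Proof. by rewrite -trmx_mul trE. Qed.

Lemma lg0 (R : realFieldType) m n (H : 'M[R]_n) (A : 'M[R]_(m, n)) (M : 'M[R]_m)
    (l k : 'I_n) (B : {set 'I_n}) : lg H A M l k B 0 0 0 0 0 0 0.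
Proof.
split; [|split; [|split; [|split; [|split]]]] => //;
  by rewrite ?mulmx0 ?zeroE ?mulr0 ?scale0r ?subr0 ?addr0.
Qed.

Theorem proposition10 (R : realFieldType) (m n : nat)
    (H : 'M[R]_n) (M : 'M[R]_m) (A : 'M[R]_(m, n))
    (l k : 'I_n) (B : {set 'I_n}) :
  psd H -> psd M ->
  l != k -> l \notin B -> k \notin B ->
  (exists (dxl dxk : R) (dxB : 'cV[R]_#|B|) (dy : 'cV[R]_m) (dzl dzk : R),
      [/\ lin_system H A M l k B dxl dxk dxB dy dzl dzk,
          dzk != 0 &
          forall (dxl' dxk' : R) (dxB' : 'cV[R]_#|B|) (dy' : 'cV[R]_m)
                 (dzl' dzk' : R),
            lin_system H A M l k B dxl' dxk' dxB' dy' dzl' dzk' ->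
            (dxl', dxk', dxB', dy', dzl', dzk') = (dxl, dxk, dxB, dy, dzl, dzk)]) ->
  Kmat H A M B l \in unitmx /\ Kmat H A M B k \in unitmx.
Proof.
move=> psdH psdM _ _ _ [dxl [dxk [dxB [dy [dzl [dzk [S1 dzk0 uniq]]]]]]].
have [HT _] := psdH; have [MT _] := psdM.
have Hsym : forall i j, H i j = H j i.
  by move=> i j; rewrite -{1}HT trE.
have HBBT : (HBB H B)^T = HBB H B.
  by apply/matrixP => i j; rewrite !mxE Hsym.
have S1' := S1.
case: S1' => [e1 [e2 [e3 [e4 [e5 e6]]]]].
suff key : forall j, (j = l \/ j = k) -> Kmat H A M B j \in unitmx.
  by split; apply: key; [left|right].
move=> j hj; rewrite unitmxE unitfE; apply/negP => /det0P [v v0 hv].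
move: v0 hv; rewrite -[v]hsubmxK -[rsubmx v]hsubmxK (mx11_scalar (lsubmx v)).
move: (lsubmx v 0 0) (lsubmx (rsubmx v)) (rsubmx (rsubmx v)) => al u w v0 hv.
have [Mw wAj wAB [F4 F5 F6]] := @kernel_facts R m n H A M B j al u w psdH psdM hv.
have Dw : lg H A M l k B (- ((acol A l)^T *m w^T) 0 0) 0 0 0 w^T
            (- ((acol A l)^T *m w^T) 0 0) (- ((acol A k)^T *m w^T) 0 0).
  split; [|split; [|split; [|split; [|split]]]] => //.
  - by rewrite !mulr0 mulmx0 zeroE; ring.
  - by rewrite !mulr0 mulmx0 zeroE; ring.
  - by rewrite !scale0r mulmx0 -trmx_mul wAB linear0 ?add0r ?subr0 ?oppr0.
  - by rewrite !scale0r mulmx0 -MT -trmx_mul Mw linear0 ?add0r ?addr0.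
  - by rewrite add0r.
have := @lg_comb R m n H A M l k B (1 + ((acol A l)^T *m w^T) 0 0) _ _ _ _ _ _ _ _ _ _ _ _ _ _ S1 Dw.
rewrite (_ : _ * 1 + _ = 1); last by ring.
move=> /uniq [] _ _ _ edy _ edzk.
have c0 : ((acol A l)^T *m w^T) 0 0 = 0.
  case: hj => hj; subst j.
    by rewrite mulTT wAj zeroE.
  move: edzk; rewrite [((acol A k)^T *m _) 0 0]mulTT wAj zeroE oppr0 addr0 => h.
  have : ((acol A l)^T *m w^T) 0 0 * dzk = 0 by lra.
  by move/eqP; rewrite mulf_eq0 (negPf dzk0) orbF => /eqP.
have w0 : w = 0.
  have wT : w^T = dy - (1 + ((acol A l)^T *m w^T) 0 0) *: dy.
    by rewrite -{1}edy [_ + w^T]addrC addrK.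
  by move: wT; rewrite c0 addr0 scale1r subrr => wT; rewrite -[w]trmxK wT linear0.
have F5T : al *: hBcol H B j + HBB H B *m u^T = 0.
  by have := congr1 trmx F5; rewrite linearD linearZ /= trmxK trmx_mul HBBT linear0.
have F6T : al *: acol A j + AB A B *m u^T = 0.
  by have := congr1 trmx F6; rewrite linearD linearZ /= trmxK trmx_mul trmxK linear0.
have [al0|al0] := eqVneq al 0.
  have Du : lg H A M l k B 0 0 0 u^T 0 0 0.
    split; [|split; [|split; [|split; [|split]]]] => //.
    - have := F4 l; rewrite al0 mul0r add0r => h.
      by rewrite mulTT h mulmx0 zeroE !mulr0; ring.
    - have := F4 k; rewrite al0 mul0r add0r => h.
      by rewrite mulTT h mulmx0 zeroE !mulr0; ring.
    - move: F5T; rewrite al0 scale0r add0r => ->.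
      by rewrite !scale0r mulmx0 ?add0r ?subr0 ?oppr0.
    - move: F6T; rewrite al0 scale0r add0r => ->.
      by rewrite !scale0r mulmx0 ?add0r ?addr0.
    - by rewrite addr0.
  have := @lg_comb R m n H A M l k B 1 _ _ _ _ _ _ _ _ _ _ _ _ _ _ S1 Du.
  rewrite mulr1 addr0 => /uniq [] _ _ edxB _ _ _.
  have u0 : u = 0.
    move: edxB; rewrite scale1r => /eqP; rewrite -subr_eq0 addrC addKr => /eqP uT.
    by rewrite -[u]trmxK uT linear0.
  have z : (0:R)%:M = 0 :> 'M[R]_1 by apply/matrixP => i0 j0; rewrite !mxE mul0rn.
  by move: v0; rewrite al0 u0 w0 z !row_mx0 eqxx.
case: hj => hj; subst j.
  have T : lg H A M l k B al al 0 u^T 0 0 0.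
    split; [|split; [|split; [|split; [|split]]]] => //.
    - have := F4 l => h.
      rewrite mulTT mulmx0 zeroE !mulr0; lra.
    - have := F4 k; rewrite Hsym => h.
      rewrite mulTT mulmx0 zeroE !mulr0; lra.
    - by rewrite scale0r mulmx0 !addr0 subr0 F5T.
    - by rewrite scale0r mulmx0 !addr0 F6T.
    - by rewrite addr0.
  have := @lg_comb R m n H A M l k B al^-1 _ _ _ _ _ _ _ _ _ _ _ _ _ _ T (@lg0 R m n H A M l k B).
  rewrite mulVf // addr0 => /uniq [] _ _ _ _ _.
  by rewrite mulr0 addr0 => dz; move: dzk0; rewrite -dz eqxx.
have h4 := F4 l.
have h5 := congr1 (fun P : 'rV[R]_#|B| => (P *m dxB) 0 0) F5.
rewrite /= mulmxDl -scalemxAl addE scaleE mul0mx zeroE in h5.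
have h6 := congr1 (fun P : 'rV[R]_m => (P *m dy) 0 0) F6.
rewrite /= mulmxDl -scalemxAl addE scaleE mul0mx zeroE in h6.
have h3 := congr1 (fun P : 'cV[R]_#|B| => (u *m P) 0 0) e3.
rewrite /= !mulmxDr mulmxN -!scalemxAr !mulmxA !(addE, scaleE, oppE) mulmx0 zeroE in h3.
rewrite e6 in e2 h3.
have : al * dzk = 0.
  have p4 := congr1 (fun x => x * dxl) h4.
  have p2 := congr1 (fun x => al * x) e2.
  simpl in p4, p2.
  nra.
by move/eqP; rewrite mulf_eq0 (negPf al0) (negPf dzk0).
Qed.
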